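(* Fix $k\in\{1,\dots,K\}$ and fix the transmit powers $\mathbf{p}_{-k}=(p_j)_{j\neq k}$ of all other users (so that the quantity $D_k>0$ below is fixed). Then the utility function $$u_k(p_k,\mathbf{p}_{-k}) \;=\; \ell_k\,\mathtt{w}\,\log_2\!\bigl(1+\theta_k\gamma_k\bigr)\,\frac{\bigl(1-e^{-\gamma_k}\bigr)^M}{p_k+p_c},\qquad \gamma_k=\frac{p_k|h_k|^2}{D_k},$$ is quasiconcave in $p_k$ on the strategy set $[0,P_{\max}]$, i.e. for all $x_1\neq x_2$ in $[0,P_{\max}]$ and all $\lambda\in(0,1)$, $$u_k(\lambda x_1+(1-\lambda)x_2,\mathbf{p}_{-k})\ \ge\ \min\{u_k(x_1,\mathbf{p}_{-k}),\,u_k(x_2,\mathbf{p}_{-k})\}.$$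
   Context: Uplink DS-CDMA with $K$ users. User $k$ transmits with power $p_k\ge 0$ over a complex channel gain $h_k\neq 0$. $\mathbf{s}_j\in\mathbb{R}^N$ is the unit-norm spreading code of user $j$, $\mathbf{d}_k\in\mathbb{R}^N$ is the linear receive filter for user $k$ (e.g. the matched filter $\mathbf{d}_k=\mathbf{s}_k$, or the $k$-th column of the decorrelator $\mathbf{S}(\mathbf{S}^T\mathbf{S})^{-1}$), normalized so that $\mathbf{d}_k^T\mathbf{s}_k=1$, and $\sigma_k^2>0$ is the noise variance. The SINR is $$\gamma_k=\frac{p_k|h_k|^2}{D_k},\qquad D_k=\sum_{j\neq k}p_j|h_j|^2(\mathbf{d}_k^T\mathbf{s}_j)^2+\sigma_k^2\,\mathbf{d}_k^T\mathbf{d}_k .$$ Constants: bandwidth $\mathtt{w}>0$; $M\ge 1$ is the packet length in bits and $L\le M$ the number of information bits, $\ell_k=L/M$; circuit power $p_c>0$; maximal transmit power $P_{\max}>0$; gap $\theta_k=-1.5/\ln(5\,\mathrm{BER}_k)\in(0,1)$ for a target bit error rate $\mathrm{BER}_k\in(0,1/5)$. The factor $(1-e^{-\gamma_k})^M$ is the efficiency function (probability of error-free packet reception). *)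

(* Defs.v *)
From Stdlib Require Import Reals Lra.
Open Scope R_scope.

(* Vectors in R^N are represented as functions nat -> R, of which only
   the components 0..N-1 matter. *)
Definition dot (N : nat) (x y : nat -> R) : R :=
  sum_f_R0 (fun i => x i * y i) (pred N).
(* Note: for N >= 1, sum_f_R0 over 0..N-1. We require N >= 1 in the statement. *)

(* Complex channel gain h = (re, im); |h|^2 *)
Definition cabs2 (h : R * R) : R := fst h * fst h + snd h * snd h.

Definition log2 (x : R) : R := ln x / ln 2.

(* Interference-plus-noise term D_k; users indexed 0..K-1.
   p j : power, h j : complex gain, s j : spreading code,
   d : receive filter of user k, sigma2 : noise variance of user k. *)
Definition Dk (K N : nat) (k : nat) (p : nat -> R) (h : nat -> R * R)
  (s : nat -> nat -> R) (d : nat -> R) (sigma2 : R) : R :=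
  sum_f_R0 (fun j => if Nat.eq_dec j k then 0
                     else p j * cabs2 (h j) * (dot N d (s j))^2) (pred K)
  + sigma2 * dot N d d.

Definition sinr (K N k : nat) (p : nat -> R) (h : nat -> R * R)
  (s : nat -> nat -> R) (d : nat -> R) (sigma2 : R) : R :=
  p k * cabs2 (h k) / Dk K N k p h s d sigma2.

Definition utility (K N k : nat) (p : nat -> R) (h : nat -> R * R)
  (s : nat -> nat -> R) (d : nat -> R) (sigma2 : R)
  (L M : nat) (w pc theta : R) : R :=
  let g := sinr K N k p h s d sigma2 in
  (INR L / INR M) * w * log2 (1 + theta * g) * (1 - exp (- g)) ^ M / (p k + pc).

Definition upd (p : nat -> R) (k : nat) (x : R) : nat -> R :=
  fun j => if Nat.eq_dec j k then x else p j.

Definition theta_of_ber (ber : R) : R := - 1.5 / ln (5 * ber).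

(* Main.v *)
Require Import Defs.
From Coquelicot Require Import Coquelicot.
From Stdlib Require Import Reals Lra Psatz.
Open Scope R_scope.

Lemma ln1p_le s : 0 <= s -> ln (1 + s) <= s.
Proof. intros. rewrite <- (ln_exp s) at 2. apply ln_le. lra. apply exp_ineq1_le. Qed.

Lemma ln1p_pos s : 0 < s -> 0 < ln (1 + s).
Proof. intros. rewrite <- ln_1. apply ln_increasing; lra. Qed.

Lemma exp_gt1 s : 0 < s -> 1 < exp s.
Proof. intros. pose proof (exp_ineq1 s ltac:(lra)). lra. Qed.

Lemma is_derive_eq (f : R -> R) x l l' : is_derive f x l -> l = l' -> is_derive f x l'.
Proof. intros H E; subst; exact H. Qed.

Section Core.
Variables a c pc : R.
Variable M : nat.
Hypothesis Ha : 0 < a.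
Hypothesis Hc : 0 < c.
Hypothesis Hpc : 0 < pc.
Hypothesis HM : (1 <= M)%nat.

Definition T1 x := (x + pc) / ((1 + a * (c * x)) * ln (1 + a * (c * x))).
Definition T2 x := (x + pc) / (exp (c * x) - 1).
Definition Q x := a * c * T1 x + INR M * c * T2 x - 1.

Lemma T1_der x : 0 < x -> is_derive T1 x
  ((ln (1 + a*(c*x)) * (1 - a*c*pc) - a*c*x - a*c*pc) /
   ((1 + a * (c * x)) * ln (1 + a * (c * x)))^2).
Proof.
  intros Hx. assert (0 < a*(c*x)) by (apply Rmult_lt_0_compat; nra).
  pose proof (ln1p_pos _ H).
  unfold T1. auto_derive.
  - repeat split; try lra. apply Rgt_not_eq. nra.
  - field. split; apply Rgt_not_eq; nra.
Qed.

Lemma T1_der_neg x : 0 < x ->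
  (ln (1 + a*(c*x)) * (1 - a*c*pc) - a*c*x - a*c*pc) /
   ((1 + a * (c * x)) * ln (1 + a * (c * x)))^2 < 0.
Proof.
  intros Hx. assert (0 < a*(c*x)) by (apply Rmult_lt_0_compat; nra).
  pose proof (ln1p_pos _ H). pose proof (ln1p_le (a*(c*x)) ltac:(lra)).
  assert (0 < a*c*pc) by (apply Rmult_lt_0_compat; nra).
  apply Rdiv_neg_pos.
  - destruct (Rle_lt_dec 1 (a*c*pc)); nra.
  - apply pow_lt. nra.
Qed.

Lemma T2_der x : 0 < x -> is_derive T2 x
  (((exp (c*x) - 1) - (x + pc) * (c * exp (c*x))) / (exp (c*x) - 1)^2).
Proof.
  intros Hx. assert (0 < c*x) by nra. pose proof (exp_gt1 _ H).
  unfold T2. auto_derive.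
  - repeat split; lra.
  - field. lra.
Qed.

Lemma T2_der_neg x : 0 < x ->
  ((exp (c*x) - 1) - (x + pc) * (c * exp (c*x))) / (exp (c*x) - 1)^2 < 0.
Proof.
  intros Hx. assert (0 < c*x) by nra. pose proof (exp_gt1 _ H).
  pose proof (exp_ineq1_le (- (c*x))).
  assert (exp (c*x) * exp (-(c*x)) = 1) by (rewrite <- exp_plus; replace (c*x + - (c*x)) with 0 by ring; apply exp_0).
  assert (exp (c*x) * (1 - c*x) <= exp (c*x) * exp (-(c*x))) by (apply Rmult_le_compat_l; lra).
  assert (0 < pc * (c * exp (c*x))) by (apply Rmult_lt_0_compat; [lra| apply Rmult_lt_0_compat; lra]).
  apply Rdiv_neg_pos.
  - nra.
  - apply pow_lt. lra.
Qed.

Lemma Q_decr x z : 0 < x -> x <= z -> Q z <= Q x.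
Proof.
  intros Hx Hxz. destruct (Req_dec x z) as [<-|Hne]. lra.
  assert (Hinc : forall x0 y0, 0 < x0 -> x0 < y0 -> (fun t => - Q t) x0 < (fun t => - Q t) y0).
  { intros. apply (incr_function (fun t => - Q t) (Finite 0) p_infty
      (fun t => - (a*c*((ln (1 + a*(c*t)) * (1 - a*c*pc) - a*c*t - a*c*pc) /
         ((1 + a * (c * t)) * ln (1 + a * (c * t)))^2)
       + INR M * c * (((exp (c*t) - 1) - (t + pc) * (c * exp (c*t))) / (exp (c*t) - 1)^2)))).
    - intros t Ht _. simpl in Ht. pose proof (is_derive_opp _ t _ (is_derive_minus _ _ t _ _ (is_derive_plus _ _ t _ _ (is_derive_scal _ t (a*c) _ (T1_der t Ht)) (is_derive_scal _ t (INR M*c) _ (T2_der t Ht))) (is_derive_const 1 t))) as H3.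
      eapply is_derive_eq; [eapply is_derive_ext; [|exact H3]|].
      + intros; simpl. unfold Q, minus, plus, scal, opp, mult; simpl. unfold mult; simpl. ring.
      + simpl. unfold Q, minus, plus, scal, opp, mult, zero; simpl. unfold mult; simpl. ring.
    - intros t Ht _. simpl in Ht.
      pose proof (T1_der_neg t Ht). pose proof (T2_der_neg t Ht).
      assert (0 < INR M) by (apply lt_0_INR; lia).
      assert (0 < a*c) by nra. assert (0 < INR M * c) by nra. nra.
    - simpl; lra.
    - lra.
    - exact I. }
  pose proof (Hinc x z Hx ltac:(lra)). simpl in H. lra.
Qed.

Definition G x := ln (ln (1 + a*(c*x))) + INR M * ln (1 - exp (-(c*x))) - ln (x + pc).
Definition f x := ln (1 + a*(c*x)) * (1 - exp (-(c*x)))^M / (x + pc).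

Lemma expm_bounds x : 0 < x -> 0 < exp (-(c*x)) < 1.
Proof.
  intros. split. apply exp_pos. rewrite <- exp_0. apply exp_increasing. nra.
Qed.

Lemma G_der x : 0 < x -> is_derive G x (Q x / (x + pc)).
Proof.
  intros Hx. assert (0 < a*(c*x)) by (apply Rmult_lt_0_compat; nra).
  pose proof (ln1p_pos _ H). pose proof (expm_bounds x Hx).
  assert (0 < c*x) by nra. pose proof (exp_gt1 _ H2).
  unfold G, Q, T1, T2. auto_derive.
  - repeat split; lra.
  - rewrite exp_Ropp. field. repeat split; try lra; try (apply Rgt_not_eq; nra).
Qed.

Lemma f_pos x : 0 < x -> 0 < f x.
Proof.
  intros Hx. assert (0 < a*(c*x)) by (apply Rmult_lt_0_compat; nra).
  pose proof (ln1p_pos _ H). pose proof (expm_bounds x Hx).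
  unfold f. apply Rdiv_lt_0_compat; [|lra]. apply Rmult_lt_0_compat; [lra|]. apply pow_lt; lra.
Qed.

Lemma f_nonneg x : 0 <= x -> 0 <= f x.
Proof.
  intros Hx. destruct (Req_dec x 0). subst. unfold f. rewrite !Rmult_0_r, Rplus_0_r, ln_1. lra.
  left. apply f_pos. lra.
Qed.

Lemma f_0 : f 0 = 0.
Proof. unfold f. rewrite !Rmult_0_r, Rplus_0_r, ln_1. field. lra. Qed.

Lemma ln_f x : 0 < x -> ln (f x) = G x.
Proof.
  intros Hx. assert (0 < a*(c*x)) by (apply Rmult_lt_0_compat; nra).
  pose proof (ln1p_pos _ H). pose proof (expm_bounds x Hx).
  assert (P1: 0 < (1 - exp (-(c*x)))^M) by (apply pow_lt; lra).
  assert (P2: 0 < / (x + pc)) by (apply Rinv_0_lt_compat; lra).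
  assert (P3: 0 < ln (1 + a*(c*x)) * (1 - exp (-(c*x)))^M) by (apply Rmult_lt_0_compat; lra).
  unfold f, G, Rdiv. rewrite (ln_mult _ _ P3 P2), (ln_mult _ _ H0 P1), ln_pow, ln_Rinv; lra.
Qed.

Lemma G_le_f x y : 0 < x -> 0 < y -> G x <= G y -> f x <= f y.
Proof.
  intros. rewrite <- ln_f in H1 by lra. rewrite <- ln_f in H1 by lra.
  destruct (Rle_lt_dec (f x) (f y)). lra.
  pose proof (ln_increasing (f y) (f x) (f_pos y H0) r). lra.
Qed.

Lemma G_mvt x y : 0 < x -> x < y -> exists z, x <= z <= y /\ G y - G x = Q z / (z + pc) * (y - x).
Proof.
  intros. destruct (MVT_gen G x y (fun t => Q t / (t + pc))) as [z [Hz E]].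
  - intros t Ht. rewrite Rmin_left, Rmax_right in Ht by lra. apply G_der. lra.
  - intros t Ht. rewrite Rmin_left, Rmax_right in Ht by lra.
    apply continuity_pt_filterlim. exact (ex_derive_continuous G t (ex_intro _ _ (G_der t ltac:(lra)))).
  - rewrite Rmin_left, Rmax_right in Hz by lra. exists z. split; auto.
Qed.

Lemma core u y v : 0 <= u -> u < y -> y < v -> Rmin (f u) (f v) <= f y.
Proof.
  intros Hu Huy Hyv. destruct (Req_dec u 0) as [->|Hu0].
  - rewrite f_0. apply Rle_trans with 0. apply Rmin_l. apply f_nonneg. lra.
  - destruct (Rle_lt_dec 0 (Q y)) as [HQ|HQ].
    + apply Rle_trans with (f u). apply Rmin_l. apply G_le_f; try lra.
      destruct (G_mvt u y) as [z [Hz E]]; try lra.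
      pose proof (Q_decr z y ltac:(lra) ltac:(lra)).
      assert (0 <= Q z / (z + pc)) by (apply Rdiv_le_0_compat; lra).
      nra.
    + apply Rle_trans with (f v). apply Rmin_r. apply G_le_f; try lra.
      destruct (G_mvt y v) as [z [Hz E]]; try lra.
      pose proof (Q_decr y z ltac:(lra) ltac:(lra)).
      assert (Q z / (z + pc) <= 0).
      { unfold Rdiv. assert (0 < / (z + pc)) by (apply Rinv_0_lt_compat; lra). nra. }
      nra.
Qed.
End Core.

Lemma sum_nonneg (An : nat -> R) n : (forall i, (i <= n)%nat -> 0 <= An i) -> 0 <= sum_f_R0 An n.
Proof.
  induction n; intros H; simpl. apply H; lia.
  apply Rplus_le_le_0_compat. apply IHn; intros; apply H; lia. apply H; lia.
Qed.

Lemma sum_sq_pos (x y : nat -> R) n :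
  sum_f_R0 (fun i => x i * y i) n <> 0 -> 0 < sum_f_R0 (fun i => x i * x i) n.
Proof.
  induction n; simpl; intros H.
  - destruct (Req_dec (x 0%nat) 0) as [E|E]. rewrite E in H. lra. nra.
  - destruct (Req_dec (sum_f_R0 (fun i => x i * y i) n) 0) as [E|E].
    + rewrite E in H. assert (x (S n) <> 0) by (intro Z; rewrite Z in H; lra).
      pose proof (sum_nonneg (fun i => x i * x i) n (fun i _ => ltac:(nra))).
      assert (0 < x (S n) * x (S n)) by nra. simpl in H1. lra.
    + pose proof (IHn E). assert (0 <= x (S n) * x (S n)) by nra. lra.
Qed.

Lemma Dk_upd K N k p h s d sigma2 x :
  Dk K N k (upd p k x) h s d sigma2 = Dk K N k p h s d sigma2.
Proof.
  unfold Dk. f_equal. apply sum_eq. intros i _. unfold upd.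
  destruct (Nat.eq_dec i k); reflexivity.
Qed.

Theorem lemma1 (K N : nat) (k : nat) (p : nat -> R) (h : nat -> R * R)
  (s : nat -> nat -> R) (d : nat -> R) (sigma2 : R)
  (L M : nat) (w pc Pmax ber : R) :
  (1 <= N)%nat -> (k < K)%nat ->
  (forall j, (j < K)%nat -> 0 <= p j) ->
  (forall j, (j < K)%nat -> h j <> (0, 0)) ->
  (forall j, (j < K)%nat -> dot N (s j) (s j) = 1) ->
  dot N d (s k) = 1 ->
  0 < sigma2 ->
  0 < w -> (1 <= M)%nat -> (L <= M)%nat ->
  0 < pc -> 0 < Pmax -> 0 < ber < 1/5 ->
  forall x1 x2 lam : R,
    0 <= x1 <= Pmax -> 0 <= x2 <= Pmax -> x1 <> x2 -> 0 < lam < 1 ->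
    utility K N k (upd p k (lam * x1 + (1 - lam) * x2)) h s d sigma2 L M w pc (theta_of_ber ber)
    >= Rmin (utility K N k (upd p k x1) h s d sigma2 L M w pc (theta_of_ber ber))
            (utility K N k (upd p k x2) h s d sigma2 L M w pc (theta_of_ber ber)).
Proof.
  intros HN HkK Hp Hh Hs Hds Hsig Hw HM HLM Hpc HPmax Hber x1 x2 lam Hx1 Hx2 Hne Hlam.
  set (D := Dk K N k p h s d sigma2).
  assert (Hc0 : 0 < cabs2 (h k)).
  { pose proof (Hh k HkK). unfold cabs2. destruct (h k) as [u v]. simpl.
    destruct (Req_dec u 0); destruct (Req_dec v 0); subst; try nra. congruence. }
  assert (HD : 0 < D).
  { unfold D, Dk.
    assert (0 < dot N d d).
    { unfold dot. apply (sum_sq_pos d (s k)). fold (dot N d (s k)). lra. }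
    apply Rplus_le_lt_0_compat; [|nra].
    apply sum_nonneg. intros i Hi. destruct (Nat.eq_dec i k). lra.
    assert (0 <= cabs2 (h i)) by (unfold cabs2; nra).
    pose proof (Hp i ltac:(lia)).
    apply Rmult_le_pos. nra. apply pow2_ge_0. }
  assert (Hth : 0 < theta_of_ber ber).
  { unfold theta_of_ber. assert (ln (5*ber) < 0).
    { rewrite <- ln_1. apply ln_increasing; lra. }
    unfold Rdiv. pose proof (Rinv_lt_0_compat _ H). nra. }
  set (cc := cabs2 (h k) / D).
  assert (Hcc : 0 < cc) by (unfold cc; apply Rdiv_lt_0_compat; lra).
  set (A := INR L / INR M * w / ln 2).
  assert (HA : 0 <= A).
  { unfold A. assert (0 < INR M) by (apply lt_0_INR; lia). pose proof (pos_INR L).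
    pose proof ln_lt_2. apply Rdiv_le_0_compat; [|lra]. apply Rmult_le_pos; [|lra].
    apply Rdiv_le_0_compat; lra. }
  assert (Hu : forall x, 0 <= x ->
     utility K N k (upd p k x) h s d sigma2 L M w pc (theta_of_ber ber)
     = A * f (theta_of_ber ber) cc pc M x).
  { intros x Hx. unfold utility, sinr. rewrite Dk_upd. fold D.
    assert (Ek : upd p k x k = x) by (unfold upd; destruct (Nat.eq_dec k k); congruence).
    rewrite Ek. unfold f, A, log2, cc.
    replace (x * cabs2 (h k) / D) with (cabs2 (h k) / D * x) by (field; lra).
    assert (0 < INR M) by (apply lt_0_INR; lia). pose proof ln_lt_2.
    field. repeat split; lra. }
  assert (Hy : 0 <= lam * x1 + (1 - lam) * x2) by nra.
  rewrite (Hu _ Hy), (Hu _ (proj1 Hx1)), (Hu _ (proj1 Hx2)).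
  assert (Hcore : Rmin (f (theta_of_ber ber) cc pc M x1) (f (theta_of_ber ber) cc pc M x2)
                  <= f (theta_of_ber ber) cc pc M (lam * x1 + (1 - lam) * x2)).
  { destruct (Rlt_or_le x1 x2) as [Hl|Hl].
    - apply core; try exact HM; try lra; try nra.
    - rewrite Rmin_comm. apply core; try exact HM; try lra; try nra. }
  apply Rle_ge. revert Hcore. apply Rmin_case_strong; intros.
  - apply Rle_trans with (A * f (theta_of_ber ber) cc pc M x1). apply Rmin_l.
    apply Rmult_le_compat_l; lra.
  - apply Rle_trans with (A * f (theta_of_ber ber) cc pc M x2). apply Rmin_r.
    apply Rmult_le_compat_l; lra.
Qed.
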